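(* Let $(M_i)_{i\in I}$ be a family of strongly sofic monoids. Then the product monoid $\prod_{i\in I}M_i$ is strongly sofic.
   Context: Hamming metric on $\operatorname{Map}(D)$ (monoid of maps $D\to D$, $D$ finite non-empty): $d_D^{\mathrm{Ham}}(f,g)=\frac{1}{|D|}|\{v:f(v)\ne g(v)\}|$. A monoid $M$ is strongly sofic if for every finite $K\subset M$ there is an integer $\Delta_K\ge1$ such that for every $\varepsilon>0$ there exist a non-empty finite set $D$ and a map $\sigma\colon M\to\operatorname{Map}(D)$ with (1) $\sigma(1_M)=\mathrm{Id}_D$; (2) $d_D^{\mathrm{Ham}}(\sigma(k_1k_2),\sigma(k_1)\sigma(k_2))\le\varepsilon$ for $k_1,k_2\in K$; (3) $d_D^{\mathrm{Ham}}(\sigma(k_1),\sigma(k_2))\ge1-\varepsilon$ for distinct $k_1,k_2\in K$; (4) $|\sigma(k)^{-1}(v)|\le\Delta_K$ for $k\in K$, $v\in D$. The product monoid has componentwise multiplication. *)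

(* Defs.v *)
From Stdlib Require Import Reals FunctionalExtensionality List.
From mathcomp Require Import all_boot.

Set Implicit Arguments.
Unset Strict Implicit.
Unset Printing Implicit Defensive.

Record monoid := Monoid {
  mcar :> Type;
  mmul : mcar -> mcar -> mcar;
  mone : mcar;
  mmulA : forall x y z, mmul x (mmul y z) = mmul (mmul x y) z;
  mmul1l : forall x, mmul mone x = x;
  mmul1r : forall x, mmul x mone = x
}.

Definition ham_dist (D : finType) (f g : D -> D) : R :=
  Rdiv (INR #|[pred v | f v != g v]|) (INR #|D|).

(* Strongly sofic monoids; finite subsets K of M are given by finite lists. *)
Definition strongly_sofic (M : monoid) : Prop :=
  forall K : list M,
  exists Delta : nat, (1 <= Delta)%N /\
  forall eps : R, Rlt 0 eps ->
  exists (D : finType) (sigma : M -> D -> D),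
    (0 < #|D|)%N /\
    sigma (mone M) = id /\
    (forall k1 k2, In k1 K -> In k2 K ->
       Rle (ham_dist (sigma (mmul k1 k2)) (sigma k1 \o sigma k2)) eps) /\
    (forall k1 k2, In k1 K -> In k2 K -> k1 <> k2 ->
       Rle (Rminus 1 eps) (ham_dist (sigma k1) (sigma k2))) /\
    (forall k v, In k K -> (#|[pred w | sigma k w == v]| <= Delta)%N).

Section Prod.
Variables (I : Type) (M : I -> monoid).
Definition prod_mul (x y : forall i, M i) : forall i, M i :=
  fun i => mmul (x i) (y i).
Definition prod_one : forall i, M i := fun i => mone (M i).
Lemma prod_mulA x y z : prod_mul x (prod_mul y z) = prod_mul (prod_mul x y) z.
Proof. apply: functional_extensionality_dep => i; exact: mmulA. Qed.
Lemma prod_mul1l x : prod_mul prod_one x = x.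
Proof. apply: functional_extensionality_dep => i; exact: mmul1l. Qed.
Lemma prod_mul1r x : prod_mul x prod_one = x.
Proof. apply: functional_extensionality_dep => i; exact: mmul1r. Qed.
Definition prod_monoid : monoid :=
  @Monoid (forall i, M i) prod_mul prod_one prod_mulA prod_mul1l prod_mul1r.
End Prod.

(* Main.v *)
Require Import Defs.
From Stdlib Require Import Reals List.
From mathcomp Require Import all_boot.
From Stdlib Require Import Lra Classical FunctionalExtensionality.

Lemma INR_leq (m n : nat) : (m <= n)%N -> Rle (INR m) (INR n).
Proof. by move/leP; apply: le_INR. Qed.
Arguments INR_leq {m n}.

Set Implicit Arguments.
Lemma ham_upper (N c1 c2 n1 n2 : nat) : (0 < n1)%N -> (0 < n2)%N ->
  (N <= c1 * n2 + n1 * c2)%N ->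
  Rle (Rdiv (INR N) (INR (n1 * n2))) (Rplus (Rdiv (INR c1) (INR n1)) (Rdiv (INR c2) (INR n2))).
Proof.
move=> h1 h2 hN.
have a0 : Rlt 0 (INR n1) by apply: lt_0_INR; apply/ltP.
have b0 : Rlt 0 (INR n2) by apply: lt_0_INR; apply/ltP.
have := INR_leq hN. rewrite -multE -plusE plus_INR !mult_INR => H.
have -> : Rplus (Rdiv (INR c1) (INR n1)) (Rdiv (INR c2) (INR n2)) =
   Rdiv (INR c1 * INR n2 + INR n1 * INR c2) (INR n1 * INR n2).
  field; lra.
apply: Rmult_le_compat_r => //.
apply: Rlt_le; apply: Rinv_0_lt_compat; nra.
Qed.

Lemma ham_lower1 (N c1 n1 n2 : nat) : (0 < n1)%N -> (0 < n2)%N ->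
  (c1 * n2 <= N)%N ->
  Rle (Rdiv (INR c1) (INR n1)) (Rdiv (INR N) (INR (n1 * n2))).
Proof.
move=> h1 h2 hN.
have a0 : Rlt 0 (INR n1) by apply: lt_0_INR; apply/ltP.
have b0 : Rlt 0 (INR n2) by apply: lt_0_INR; apply/ltP.
have := INR_leq hN. rewrite -multE !mult_INR => H.
have -> : Rdiv (INR c1) (INR n1) = Rdiv (INR c1 * INR n2) (INR n1 * INR n2).
  field; lra.
apply: Rmult_le_compat_r => //.
apply: Rlt_le; apply: Rinv_0_lt_compat; nra.
Qed.

Lemma ham_lower2 (N c2 n1 n2 : nat) : (0 < n1)%N -> (0 < n2)%N ->
  (n1 * c2 <= N)%N ->
  Rle (Rdiv (INR c2) (INR n2)) (Rdiv (INR N) (INR (n1 * n2))).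
Proof.
move=> h1 h2 hN; rewrite mulnC; apply: ham_lower1 => //; by rewrite mulnC.
Qed.

Section Gen.
Variables (I : Type) (M : I -> monoid).
Let P := prod_monoid M.

Definition Q (js : list I) (K : list P) : Prop :=
  exists Delta : nat, (1 <= Delta)%N /\
  forall eps : R, Rlt 0 eps ->
  exists (D : finType) (sigma : P -> D -> D),
    (0 < #|D|)%N /\
    sigma (mone P) = id /\
    (forall k1 k2, In k1 K -> In k2 K ->
       Rle (ham_dist (sigma (mmul k1 k2)) (sigma k1 \o sigma k2)) eps) /\
    (forall k1 k2 : P, In k1 K -> In k2 K -> (exists j, In j js /\ k1 j <> k2 j) ->
       Rle (Rminus 1 eps) (ham_dist (sigma k1) (sigma k2))) /\
    (forall k v, In k K -> (#|[pred w | sigma k w == v]| <= Delta)%N).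

Lemma Q_nil K : Q nil K.
Proof.
exists 1%N; split => // eps he.
exists (unit : finType), (fun _ => id); split; first by rewrite card_unit.
split => //; split.
  move=> k1 k2 _ _; rewrite /ham_dist.
  have -> : #|[pred v : unit | id v != id v]| = 0%N.
    by apply: eq_card0 => x; rewrite !inE eqxx.
  rewrite /= Rdiv_0_l; lra.
split; first by move=> k1 k2 _ _ [j [[]]].
move=> k v _; apply: leq_trans (max_card _) _; by rewrite card_unit.
Qed.

Lemma Q_cons j js K : strongly_sofic (M j) -> Q js K -> Q (j :: js) K.
Proof.
move=> /(_ (map (fun k : P => k j) K)) [D1 [hD1 H1]] [D2 [hD2 H2]].
exists (D1 * D2)%N; split; first by rewrite muln_gt0 hD1.
move=> eps he.
have he2 : Rlt 0 (eps / 2) by lra.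
have [T1 [s1 [c1 [o1 [m1 [sep1 pre1]]]]]] := H1 _ he2.
have [T2 [s2 [c2 [o2 [m2 [sep2 pre2]]]]]] := H2 _ he2.
exists (((T1 * T2)%type : finType)), (fun x p => (s1 (x j) p.1, s2 x p.2)).
have cardT : #|((T1 * T2)%type : finType)| = (#|T1| * #|T2|)%N by rewrite card_prod.
split; first by rewrite cardT muln_gt0 c1.
split.
  apply: functional_extensionality => -[a b] /=.
  by rewrite o2 /prod_one o1.
have key : forall (f g : T1 -> T1) (h l : T2 -> T2),
  let N := #|[pred p : ((T1 * T2)%type : finType) | (f p.1, h p.2) != (g p.1, l p.2)]| in
  [/\ (N <= #|[pred a | f a != g a]| * #|T2| + #|T1| * #|[pred b | h b != l b]|)%N,
      (#|[pred a | f a != g a]| * #|T2| <= N)%N &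
      (#|T1| * #|[pred b | h b != l b]| <= N)%N].
  move=> f g h l N.
  have E1 : (#|[pred a | f a != g a]| * #|T2|)%N =
     #|setX [set a | f a != g a] [set: T2]|.
    by rewrite cardsX cardsT; congr (_ * _)%N; apply: eq_card => a; rewrite inE.
  have E2 : (#|T1| * #|[pred b | h b != l b]|)%N =
     #|setX [set: T1] [set b | h b != l b]|.
    by rewrite cardsX cardsT; congr (_ * _)%N; apply: eq_card => a; rewrite inE.
  have EN : N = #|setX [set a | f a != g a] [set: T2] :|: setX [set: T1] [set b | h b != l b]|.
    apply: eq_card => -[a b]; rewrite !inE /= xpair_eqE negb_and.
    by rewrite andbT.
  rewrite E1 E2 EN; split.
  - by rewrite cardsU leq_subr.
  - by apply: subset_leq_card; apply: subsetUl.
  - by apply: subset_leq_card; apply: subsetUr.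
have ham_eq : forall (f g : T1 -> T1) (h l : T2 -> T2),
  ham_dist (fun p : ((T1 * T2)%type : finType) => (f p.1, h p.2)) (fun p => (g p.1, l p.2)) =
  Rdiv (INR #|[pred p : ((T1 * T2)%type : finType) | (f p.1, h p.2) != (g p.1, l p.2)]|)
       (INR (#|T1| * #|T2|)).
  by move=> f g h l; rewrite /ham_dist cardT.
split.
  move=> k1 k2 i1 i2.
  have := key (s1 (mmul (k1 j) (k2 j))) (s1 (k1 j) \o s1 (k2 j))
              (s2 (mmul k1 k2)) (s2 k1 \o s2 k2).
  move=> [u _ _].
  have e1 := m1 (k1 j) (k2 j) (in_map _ _ _ i1) (in_map _ _ _ i2).
  have e2 := m2 k1 k2 i1 i2.
  have hu := @ham_upper _ _ _ _ _ c1 c2 u.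
  have -> : ham_dist (fun p : ((T1 * T2)%type : finType) => (s1 (mmul k1 k2 j) p.1, s2 (mmul k1 k2) p.2))
      ((fun p => (s1 (k1 j) p.1, s2 k1 p.2)) \o (fun p => (s1 (k2 j) p.1, s2 k2 p.2))) =
    Rdiv (INR #|[pred p : ((T1 * T2)%type : finType) | (s1 (mmul (k1 j) (k2 j)) p.1, s2 (mmul k1 k2) p.2)
       != ((s1 (k1 j) \o s1 (k2 j)) p.1, (s2 k1 \o s2 k2) p.2)]|) (INR (#|T1| * #|T2|)).
    by rewrite /ham_dist cardT.
  rewrite /ham_dist in e1 e2.
  lra.
split.
  move=> k1 k2 i1 i2 [i [[<-|ii] ne]].
  - have := key (s1 (k1 j)) (s1 (k2 j)) (s2 k1) (s2 k2).
    move=> [_ l _].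
    have := @ham_lower1 _ _ _ _ c1 c2 l.
    have e := sep1 (k1 j) (k2 j) (in_map _ _ _ i1) (in_map _ _ _ i2) ne.
    rewrite /ham_dist in e *; rewrite cardT => h.
    apply: Rle_trans (Rle_trans _ _ _ e h); lra.
  - have := key (s1 (k1 j)) (s1 (k2 j)) (s2 k1) (s2 k2).
    move=> [_ _ l].
    have := @ham_lower2 _ _ _ _ c1 c2 l.
    have e := sep2 k1 k2 i1 i2 (ex_intro _ i (conj ii ne)).
    rewrite /ham_dist in e *; rewrite cardT => h.
    apply: Rle_trans (Rle_trans _ _ _ e h); lra.
move=> k [v1 v2] ik.
have -> : #|[pred w : ((T1 * T2)%type : finType) | (s1 (k j) w.1, s2 k w.2) == (v1, v2)]| =
   #|setX [set a | s1 (k j) a == v1] [set b | s2 k b == v2]|.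
  by apply: eq_card => -[a b]; rewrite !inE /= xpair_eqE.
rewrite cardsX; apply: leq_mul.
- rewrite (eq_card (B := [pred a | s1 (k j) a == v1])); first exact: pre1 (in_map _ _ _ ik).
  by move=> a; rewrite inE.
- rewrite (eq_card (B := [pred a | s2 k a == v2])); first exact: pre2 ik.
  by move=> a; rewrite inE.
Qed.

End Gen.

Theorem proposition3p8 (I : Type) (M : I -> monoid) :
  (forall i, strongly_sofic (M i)) -> strongly_sofic (prod_monoid M).
Proof.
move=> hM K.
have [js hjs] : exists js : list I, forall k1 k2 : prod_monoid M, In k1 K -> In k2 K -> k1 <> k2 ->
    exists j, In j js /\ k1 j <> k2 j.
  suff : forall L : list (prod_monoid M * prod_monoid M), exists js : list I,
      forall p, In p L -> p.1 <> p.2 -> exists j, In j js /\ p.1 j <> p.2 j.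
    move=> /(_ (list_prod K K)) [js h]; exists js => k1 k2 i1 i2 ne.
    by apply: (h (k1, k2)) => //; apply: in_prod.
  elim => [|[a b] L [js IH]]; first by exists nil.
  case: (classic (a = b)) => [eab|nab].
    exists js => p [<-|ip] //=; exact: IH.
  have [i ni] : exists i, a i <> b i.
    apply: not_all_ex_not => h; apply: nab; exact: functional_extensionality_dep.
  exists (i :: js) => p [<-|ip] ne.
    by exists i; split => //; left.
  have [j [jj nj]] := IH p ip ne; exists j; split => //; by right.
have : @Q I M js K.
  elim: js {hjs} => [|j js IH]; first exact: Q_nil.
  exact: Q_cons.
move=> [D [hD H]]; exists D; split => // eps he.
have [T [s [c [o [m [sep pre]]]]]] := H eps he.
exists T, s; do 4 (split => //).
by move=> k1 k2 i1 i2 ne; apply: sep => //; apply: hjs.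
Qed.
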